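(* Let $2\le k<d+1$ and let $\Delta_k^d=\operatorname{tconv}\{-e_I:I\subseteq[d+1],|I|=k\}\subseteq\mathbb{T}^d$ with $V$ the family of these $\binom{d+1}{k}$ points. Then the set of coarse types of the maximal cells of the tropical complex $\mathcal{C}_V$ is, up to permutation of coordinates by $\operatorname{Sym}(d+1)$, the set of tuples $$\Big(\tbinom{d+1-\alpha}{k}+\tbinom{d}{k-1},\ \tbinom{d-1}{k-1},\ \dots,\ \tbinom{d-(\alpha-1)}{k-1},\ \underbrace{0,\dots,0}_{d+1-\alpha}\Big)$$ for $1\le\alpha\le d+2-k$; that is, the set of coarse types of maximal cells is the union of the $\operatorname{Sym}(d+1)$-orbits of these tuples.
   Context: Tropical arithmetic is min-plus; $\mathbb{T}^d=\mathbb{R}^{d+1}/\mathbb{R}(1,\dots,1)$; $e_I=\sum_{i\in I}e_i$. For $m\in[d+1]$ let $\bar S_m=\{\xi\in\mathbb{T}^d:\xi_m=\min_i\xi_i\}$. For $V=(v_1,\dots,v_n)$ and $x\in\mathbb{T}^d$, $\operatorname{type}_V(x)=(T_1,\dots,T_{d+1})$ with $T_m=\{l:v_l\in x+\bar S_m\}$. The cells $\{x:\operatorname{type}_V(x)=\mathcal{T}\}$ have closures forming a polyhedral subdivision $\mathcal{C}_V$ of $\mathbb{T}^d$ (the tropical complex); maximal cells are the inclusion-maximal ones. The coarse type of a cell is $(|T_1|,\dots,|T_{d+1}|)$ for its relative interior points. *)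

(* Defs.v *)
From HB Require Import structures.
From mathcomp Require Import all_boot all_order all_algebra all_fingroup.
From mathcomp Require Import all_classical all_reals all_analysis.
Set Implicit Arguments. Unset Strict Implicit. Unset Printing Implicit Defensive.
Import Order.TTheory GRing.Theory Num.Theory.
Import numFieldNormedType.Exports.
Local Open Scope classical_set_scope.
Local Open Scope ring_scope.

(* Throughout n = d+1; coordinates are indexed by 'I_n = [d+1] (0-based).
   Points of T^d are represented by points of R^n = 'rV[R]_n; every notion
   below is invariant under x |-> x + c(1,...,1), so this is harmless. *)

Definition negeI (R : realType) (n : nat) (I : {set 'I_n}) : 'rV[R]_n :=
  \row_i (- (i \in I)%:R).

Definition labels (n k : nat) : {set {set 'I_n}} := [set I : {set 'I_n} | #|I| == k].

Definition in_sector (R : realType) (n : nat) (x v : 'rV[R]_n) (m : 'I_n) : bool :=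
  [forall i : 'I_n, (v - x) ord0 m <= (v - x) ord0 i].

Definition vtype (R : realType) (n k : nat) (x : 'rV[R]_n)
  : {ffun 'I_n -> {set {set 'I_n}}} :=
  [ffun m => [set I in labels n k | in_sector x (negeI R I) m]].

Definition cell (R : realType) (n k : nat) (T : {ffun 'I_n -> {set {set 'I_n}}})
  : set 'rV[R]_n := [set x | vtype k x = T].

Definition is_closed_cell (R : realType) (n k : nat) (C : set 'rV[R]_n) : Prop :=
  exists T, @cell R n k T !=set0 /\ C = closure (@cell R n k T).

Definition is_maximal_cell (R : realType) (n k : nat) (C : set 'rV[R]_n) : Prop :=
  is_closed_cell k C /\
  forall C' : set 'rV[R]_n, is_closed_cell k C' -> C `<=` C' -> C = C'.

Definition coarse (n : nat) (T : {ffun 'I_n -> {set {set 'I_n}}}) : {ffun 'I_n -> nat} :=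
  [ffun m => #|T m|].

(* the tuple (C(d+1-a,k)+C(d,k-1), C(d-1,k-1), ..., C(d-(a-1),k-1), 0,...,0)
   with n = d+1, written with 0-based index i *)
Definition tuple_alpha (n k a : nat) : {ffun 'I_n -> nat} :=
  [ffun i : 'I_n =>
     if val i == 0%N then ('C(n - a, k) + 'C(n.-1, k.-1))%N
     else if (val i < a)%N then 'C(n.-1 - val i, k.-1)
     else 0%N].

(* Main.v *)
Require Import Defs.
From HB Require Import structures.
From mathcomp Require Import all_boot all_order all_algebra all_fingroup.
From mathcomp Require Import all_classical all_reals all_analysis.
From mathcomp Require Import ring lra zify.
Import numFieldNormedType.Exports.
Set Implicit Arguments. Unset Strict Implicit. Unset Printing Implicit Defensive.
Import Order.TTheory GRing.Theory Num.Theory.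
Local Open Scope classical_set_scope.
Local Open Scope ring_scope.

Section EV.
Variable R : realType.
Definition evp (Q : R -> Prop) := exists r : R, 0 < r /\ forall e, 0 < e -> e < r -> Q e.

Lemma evp_and (P Q : R -> Prop) : evp P -> evp Q -> evp (fun e => P e /\ Q e).
Proof.
move=> [r1 [r10 H1]] [r2 [r20 H2]]; exists (Num.min r1 r2); split.
  by rewrite lt_min r10 r20.
move=> e e0; rewrite lt_min => /andP[e1 e2]; split; [exact: H1|exact: H2].
Qed.

Lemma evp_mono (P Q : R -> Prop) : (forall e, P e -> Q e) -> evp P -> evp Q.
Proof. by move=> PQ [r [r0 H]]; exists r; split => // e e0 er; apply/PQ/H. Qed.

Lemma evp_T (P : R -> Prop) : (forall e, 0 < e -> P e) -> evp P.
Proof. by move=> H; exists 1; split => // e e0 _; apply: H. Qed.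

Lemma evp_seq (T : eqType) (s : seq T) (Q : T -> R -> Prop) :
  (forall i, evp (Q i)) -> evp (fun e => forall i, i \in s -> Q i e).
Proof.
move=> H; elim: s => [|a s IH]; first by apply: evp_T.
apply: evp_mono (evp_and (H a) IH) => e [Ha Hs] i; rewrite inE => /orP[/eqP->//|].
exact: Hs.
Qed.

Lemma evp_forall (T : finType) (Q : T -> R -> Prop) :
  (forall i, evp (Q i)) -> evp (fun e => forall i, Q i e).
Proof.
move=> H; apply: evp_mono (evp_seq (enum T) H) => e He i; apply: He.
by rewrite mem_enum.
Qed.

Lemma evp_ex (P : R -> Prop) : evp P -> exists e, 0 < e /\ P e.
Proof.
move=> [r [r0 H]]; exists (r / 2); split; first lra.
apply: H; lra.
Qed.

Lemma evp_lt (b : R) : 0 < b -> evp (fun e => e < b).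
Proof. by move=> b0; exists b; split. Qed.

Lemma evp_le (a b wa wb : R) :
  evp (fun e => (a + e * wa <= b + e * wb) =
         ((a < b) || ((a == b) && (wa <= wb)))).
Proof.
have [ab|ab|ab] := ltgtP a b.
- exists ((b - a) / (`|wa - wb| + 1)); split.
    by apply: divr_gt0; [lra| have := normr_ge0 (wa - wb); lra].
  move=> e e0; rewrite ltr_pdivlMr; last by have := normr_ge0 (wa - wb); lra.
  move=> h /=; have := ler_norm (wa - wb) => hn.
  have : e * (wa - wb) <= e * `|wa - wb| by rewrite ler_pM2l.
  lra.
- exists ((a - b) / (`|wa - wb| + 1)); split.
    by apply: divr_gt0; [lra| have := normr_ge0 (wa - wb); lra].
  move=> e e0; rewrite ltr_pdivlMr; last by have := normr_ge0 (wa - wb); lra.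
  move=> h /=; apply/negbTE; rewrite -ltNge; have := ler_norm (wb - wa).
  rewrite distrC => hn.
  have : e * (wb - wa) <= e * `|wa - wb| by rewrite ler_pM2l.
  lra.
- apply: evp_T => e e0; rewrite ab /= lerD2l.
  by rewrite ler_pM2l.
Qed.

Lemma evp_neq (p q c : R) : q != 0 -> evp (fun e => p + e * q != c).
Proof.
move=> q0; have [pc|pc] := eqVneq p c.
  apply: evp_T => e e0; rewrite pc; apply/eqP => h.
  have : e * q = 0 by lra.
  by move/eqP; rewrite mulf_eq0 (negbTE q0) orbF => /eqP e00; move: e0; rewrite e00 ltxx.
exists (`|p - c| / (`|q| + 1)); split.
  apply: divr_gt0; last by have := normr_ge0 q; lra.
  by rewrite normr_gt0 subr_eq0.
move=> e e0; rewrite ltr_pdivlMr; last by have := normr_ge0 q; lra.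
move=> h; apply/eqP => hh.
have : `|p - c| = `|e * q| by rewrite -normrN; congr `|_|; lra.
rewrite normrM gtr0_norm // => hh2.
have : e * `|q| < e * (`|q| + 1) by rewrite ltr_pM2l //; lra.
lra.
Qed.
Lemma closure_evp (n : nat) (S : set 'rV[R]_n) x w :
  evp (fun e => S (x + e *: w)) -> closure S x.
Proof.
move=> Hev B /nbhs_ballP [e e0 sub].
have w0 : 0 < `|w| + 1 by have := normr_ge0 w; lra.
have [ep [ep0 [Sep lt]]] := evp_ex (evp_and Hev (evp_lt (divr_gt0 e0 w0))).
exists (x + ep *: w); split => //; apply: sub.
rewrite -ball_normE /ball_ /= opprD addrA subrr sub0r normrN normrZ gtr0_norm //.
move: lt; rewrite ltr_pdivlMr // => lt.
have : ep * `|w| <= ep * (`|w| + 1) by rewrite ler_pM2l //; lra.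
lra.
Qed.
End EV.
Lemma argmax_pert (R : realType) (n : nat) (a w' : 'I_n -> R) m :
  [forall i, (a i < a m) || (a i == a m) && (w' i <= w' m)] =
  [forall i, a i <= a m] && [forall j, [forall i, a i <= a j] ==> (w' j <= w' m)].
Proof.
apply/forallP/andP.
  move=> H; split; apply/forallP.
    by move=> i; have /orP[/ltW //|/andP[/eqP -> _]] := H i.
  move=> j; apply/implyP => /forallP /(_ m) hm.
  have /orP[hj|/andP[_ //]] := H j.
  by move: hm; rewrite leNgt hj.
move=> [/forallP H1 /forallP H2] i.
rewrite lt_neqAle H1 andbT; have [e|//] := eqVneq (a i) (a m).
rewrite /=; have /implyP := H2 i; apply; apply/forallP => l; rewrite e; exact: H1.
Qed.
Section S.
Variables (R : realType) (n : nat).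
Implicit Types (x y w : 'rV[R]_n).
Lemma ballrE x e y : ball x e y <-> 0 < e /\ forall j, `|x ord0 j - y ord0 j| < e.
Proof.
split.
  case=> e0 H; split => // j; have := H ord0 j. rewrite /ball /=. done.
case=> e0 H; split => // i j; rewrite (ord1 i); have := H j; rewrite /ball /=. done.
Qed.

Lemma closure_sector (S : set 'rV[R]_n) z v m :
  (forall y, S y -> in_sector y v m) -> closure S z -> in_sector z v m.
Proof.
move=> H cl; apply/forallP => i; rewrite leNgt; apply/negP => hlt.
set dl := (v - z) ord0 m - (v - z) ord0 i.
have dl0 : 0 < dl by rewrite /dl subr_gt0.
have [y [Sy /ballrE [_ hb]]] := cl _ (nbhsx_ballx z (dl / 2) (divr_gt0 dl0 (ltr0Sn _ 1))).
have := H y Sy => /forallP /(_ i); move: (hb m) (hb i) dl0; rewrite /dl !mxE.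
rewrite !ltr_norml; lra.
Qed.
End S.

Section P.
Variables (R : realType) (n k : nat).
Implicit Types (x y w : 'rV[R]_n).
Definition gI (I : {set 'I_n}) x (j : 'I_n) : R := x ord0 j + (j \in I)%:R.

Lemma in_sectorE x I m :
  in_sector x (negeI R I) m = [forall i, gI I x i <= gI I x m].
Proof.
apply/forallP/forallP => H i; move: (H i); rewrite /gI !mxE; lra.
Qed.

Lemma in_vtype x I m :
  (I \in vtype k x m) = (#|I| == k) && [forall i, gI I x i <= gI I x m].
Proof. by rewrite ffunE !inE in_sectorE. Qed.

Definition Phi (T : {ffun 'I_n -> {set {set 'I_n}}}) w :
  {ffun 'I_n -> {set {set 'I_n}}} :=
  [ffun m => [set I in T m | [forall j, (I \in T j) ==> (w ord0 j <= w ord0 m)]]].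

Lemma vtype_perturb x w :
  evp (fun e : R => vtype k (x + e *: w) = Phi (vtype k x) w).
Proof.
have := @evp_forall R _ (fun (p : {set 'I_n} * 'I_n * 'I_n) e =>
  let: (J, m, i) := p in
  (gI J x i + e * w ord0 i <= gI J x m + e * w ord0 m) =
  ((gI J x i < gI J x m) || ((gI J x i == gI J x m) && (w ord0 i <= w ord0 m)))).
case=> [[[J m] i]|]; first exact: evp_le.
move=> r [r0 H]; exists r; split => // e e0 er.
have He := H e e0 er.
apply/ffunP => m; apply/setP => I.
rewrite in_vtype /Phi ffunE inE.
have -> : [forall i, gI I (x + e *: w) i <= gI I (x + e *: w) m] =
   [forall i, (gI I x i < gI I x m) || ((gI I x i == gI I x m) && (w ord0 i <= w ord0 m))].
  apply: eq_forallb => i; rewrite -(He (I, m, i)) /gI !mxE; congr (_ <= _); lra.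
rewrite argmax_pert in_vtype.
case hk: (#|I| == k) => //=.
congr (_ && _); by apply: eq_forallb => j; rewrite in_vtype hk.
Qed.
End P.

Section K.
Local Open Scope nat_scope. Local Open Scope set_scope.
Lemma countK1 (T : finType) (C : {set T}) k :
  #|[set I : {set T} | (#|I| == k) && (I \subset C)]| = 'C(#|C|, k).
Proof.
by rewrite -cards_draws; apply: eq_card => I; rewrite !inE andbC.
Qed.

Lemma countK2 (T : finType) (C : {set T}) m k : m \in C -> (0 < k)%N ->
  #|[set I : {set T} | [&& #|I| == k, m \in I & I \subset C]]| =
  'C(#|C|.-1, k.-1).
Proof.
move=> mC k0.
have cB : #|C :\ m| = #|C|.-1 by rewrite (cardsD1 m C) mC.
rewrite -cB -countK1.
set S := [set J : {set T} | (#|J| == k.-1) && (J \subset C :\ m)].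
have -> : [set I : {set T} | [&& #|I| == k, m \in I & I \subset C]] =
          [set m |: J | J in S].
  apply/setP => I; rewrite !inE; apply/idP/imsetP.
  - case/and3P => /eqP cI mI dI; exists (I :\ m); last by rewrite finset.setD1K.
    rewrite inE; apply/andP; split.
      by rewrite (cardsD1 m I) mI in cI; rewrite -cI.
    by apply: finset.setSD.
  - case=> J; rewrite inE => /andP[/eqP cJ dJ] ->.
    have mJ : m \notin J.
      by apply/negP => /(fintype.subsetP dJ); rewrite !inE eqxx.
    rewrite cardsU1 mJ cJ add1n (ltn_predK k0) eqxx setU11 /=.
    apply/fintype.subsetP => z; rewrite !inE => /orP[/eqP -> //|/(fintype.subsetP dJ)].
    by rewrite !inE => /andP[].
rewrite card_in_imset //.
move=> J1 J2; rewrite !inE => /andP[_ d1] /andP[_ d2] e.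
have n1 : m \notin J1 by apply/negP => /(fintype.subsetP d1); rewrite !inE eqxx.
have n2 : m \notin J2 by apply/negP => /(fintype.subsetP d2); rewrite !inE eqxx.
by rewrite -(finset.setU1K n1) -(finset.setU1K n2) e.
Qed.
End K.

Section G.
Local Open Scope set_scope.
Variables (R : realType) (n k : nat).
Implicit Types (x y w : 'rV[R]_n).
Local Notation gI := (@gI R n).

Definition SG x := forall i j : 'I_n, i != j -> (x ord0 i != x ord0 j) && (x ord0 i - x ord0 j != 1).
Definition Aset x := [set j : 'I_n | [forall i, x ord0 i < x ord0 j + 1]].
Definition Uset x m := [set j : 'I_n | x ord0 m < x ord0 j].

Lemma gI_in (I : {set 'I_n}) x (i : 'I_n) : i \in I -> gI I x i = x ord0 i + 1.
Proof. by rewrite /gI => ->. Qed.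
Lemma gI_out (I : {set 'I_n}) x (i : 'I_n) : i \notin I -> gI I x i = x ord0 i.
Proof. by rewrite /gI => /negbTE ->; rewrite addr0. Qed.

Lemma charT x (t : 'I_n) (sg : SG x) (ht : forall i, x ord0 i <= x ord0 t) (I : {set 'I_n}) (m : 'I_n) :
  [forall i, gI I x i <= gI I x m] =
  ((m \in I) && (m \in Aset x) && (I \subset ~: Uset x m)) ||
  ((m == t) && (I \subset ~: Aset x)).
Proof.
have tA : t \in Aset x by rewrite inE; apply/forallP => i; have := ht i; lra.
have mA : (m \in Aset x) = (x ord0 t < x ord0 m + 1).
  rewrite inE; apply/forallP/idP => [/(_ t) //|h i]; have := ht i; lra.
have gge i : x ord0 i <= gI I x i.
  by case: (boolP (i \in I)) => hi; [rewrite gI_in //; lra | rewrite gI_out].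
apply/forallP/idP.
- move=> H; case: (boolP (m \in I)) => mI /=.
  + have gm := gI_in x mI.
    have -> : m \in Aset x.
      rewrite mA; have := H t; rewrite gm => h1; have := gge t => h2.
      have [->|tm] := eqVneq t m; first lra.
      have /andP[_ h3] := sg _ _ tm.
      have : x ord0 t <= x ord0 m + 1 by lra.
      by rewrite le_eqVlt => /orP[/eqP e|//]; move: h3; rewrite e addrC addKr eqxx.
    rewrite /=; apply/orP; left; apply/fintype.subsetP => j jI; rewrite !inE -leNgt.
    by have := H j; rewrite gm gI_in //; lra.
  + have gm := gI_out x mI.
    have := H t; rewrite gm => h1; have := gge t => h2; have := ht m => h3.
    have tm : t = m.
      apply/eqP; apply/negP => /negP tm; have /andP[h4 _] := sg _ _ tm.
      have e : x ord0 t = x ord0 m by lra.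
      by rewrite e eqxx in h4.
    subst t; rewrite eqxx /=; apply/fintype.subsetP => j jI; rewrite !inE.
    apply/negP => /forallP /(_ m) hj.
    by have := H j; rewrite gm gI_in //; lra.
- case/orP => [/andP[/andP[mI mA'] sub]|/andP[/eqP mt sub]] i.
  + rewrite (gI_in x mI); move: mA'; rewrite mA => mA'.
    case: (boolP (i \in I)) => hi.
      rewrite gI_in //; have := fintype.subsetP sub _ hi; rewrite !inE -leNgt; lra.
    by rewrite gI_out //; have := ht i; lra.
  + subst m.
    have tI : t \notin I by apply/negP => /(fintype.subsetP sub); rewrite inE tA.
    rewrite (gI_out x tI).
    case: (boolP (i \in I)) => hi; last by rewrite gI_out.
    rewrite gI_in //; have := fintype.subsetP sub _ hi; rewrite !inE negb_forall.
    case/existsP => l; rewrite -leNgt => hl; have := ht l; lra.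
Qed.

Definition tv (a r : nat) : nat :=
  if r == 0%N then ('C(n - a, k) + 'C(n.-1, k.-1))%N
  else if (r < a)%N then 'C(n.-1 - r, k.-1) else 0%N.

Lemma card_vtype x (t : 'I_n) (sg : SG x) (ht : forall i, x ord0 i <= x ord0 t)
  (m : 'I_n) (k0 : (0 < k)%N) :
  #|vtype k x m| = tv #|Aset x| #|Uset x m|.
Proof.
have vt : vtype k x m = [set I : {set 'I_n} | (#|I| == k) &&
   (((m \in I) && (m \in Aset x) && (I \subset ~: Uset x m)) ||
    ((m == t) && (I \subset ~: Aset x)))].
  by apply/setP => I; rewrite in_vtype inE (charT sg ht).
have tA : t \in Aset x by rewrite inE; apply/forallP => i; have := ht i; lra.
have cC (B : {set 'I_n}) : #|~: B| = (n - #|B|)%N.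
  by have := cardsC B; rewrite card_ord; lia.
have dist i j : i != j -> x ord0 i != x ord0 j by move=> /sg /andP[].
rewrite vt /tv.
have [mt|mt] := eqVneq m t.
- subst m.
  have U0 : Uset x t = finset.set0.
    by apply/setP => j; rewrite !inE ltNge ht.
  rewrite U0 cards0 eqxx finset.setC0.
  have -> : [set I : {set 'I_n} | (#|I| == k) &&
        ((t \in I) && (t \in Aset x) && (I \subset [set: 'I_n]) ||
         true && (I \subset ~: Aset x))] =
      [set I : {set 'I_n} | [&& #|I| == k, t \in I & I \subset [set: 'I_n]]] :|:
      [set I : {set 'I_n} | (#|I| == k) && (I \subset ~: Aset x)].
    by apply/setP => I; rewrite tA !inE andbT; case: (#|I| == k).
  rewrite cardsU.
  have -> : [set I : {set 'I_n} | [&& #|I| == k, t \in I & I \subset [set: 'I_n]]] :&: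
      [set I : {set 'I_n} | (#|I| == k) && (I \subset ~: Aset x)] = finset.set0.
    apply/setP => I; rewrite !inE; apply/negP => /andP[/and3P[_ tI _] /andP[_ sub]].
    by have := fintype.subsetP sub _ tI; rewrite inE tA.
  rewrite cards0 subn0 countK2 ?inE // countK1 cardsT card_ord cC addnC.
  done.
- case: (boolP (m \in Aset x)) => mA.
  + have -> : [set I : {set 'I_n} | (#|I| == k) &&
        ((m \in I) && true && (I \subset ~: Uset x m) ||
         false && (I \subset ~: Aset x))] =
      [set I : {set 'I_n} | [&& #|I| == k, m \in I & I \subset ~: Uset x m]].
      by apply/setP => I; rewrite !inE andbT orbF.
    rewrite countK2 ?inE ?ltxx // cC.
    have tU : t \in Uset x m.
      rewrite inE lt_neqAle ht andbT; exact: dist.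
    have -> : (#|Uset x m| == 0%N) = false.
      by apply/negbTE; rewrite -lt0n; apply/card_gt0P; exists t.
    have -> : (#|Uset x m| < #|Aset x|)%N.
      apply: proper_card; apply/properP; split; last first.
        by exists m => //; rewrite inE ltxx.
      apply/fintype.subsetP => j; rewrite !inE => hj; apply/forallP => i.
      by move: mA; rewrite inE => /forallP /(_ i); lra.
    by congr 'C(_, _); rewrite -subn1 -subnDA addnC subnDA subn1.
  + have -> : [set I : {set 'I_n} | (#|I| == k) &&
        ((m \in I) && false && (I \subset ~: Uset x m) ||
         false && (I \subset ~: Aset x))] = finset.set0.
      by apply/setP => I; rewrite !inE andbF andbF.
    have AU : (#|Aset x| <= #|Uset x m|)%N.
      apply: subset_leq_card; apply/fintype.subsetP => j; rewrite !inE => /forallP hj.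
      move: mA; rewrite inE negb_forall => /existsP [l]; rewrite -leNgt => hl.
      by have := hj l; lra.
    have A1 : (0 < #|Aset x|)%N by apply/card_gt0P; exists t.
    rewrite cards0 ifN; last by rewrite -lt0n; apply: leq_trans AU.
    by rewrite ltnNge AU.
Qed.

Lemma Uset_lt x m : (#|Uset x m| < n)%N.
Proof.
rewrite -[X in (_ < X)%N]card_ord; apply: proper_card; apply/properP; split.
  by apply/fintype.subsetP.
by exists m => //; rewrite inE ltxx.
Qed.

Lemma rank_inj x : SG x -> injective (fun m => #|Uset x m|).
Proof.
move=> sg i j e; apply/eqP; apply/negP => /negP ij.
have /andP[dij _] := sg _ _ ij.
wlog lt : i j e ij dij / x ord0 i < x ord0 j.
  move=> W; have [h|h|h] := ltgtP (x ord0 i) (x ord0 j).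
  - exact: W h.
  - by apply: (W j i) => //; rewrite eq_sym.
  - by rewrite h eqxx in dij.
have : (#|Uset x j| < #|Uset x i|)%N.
  apply: proper_card; apply/properP; split.
    by apply/fintype.subsetP => l; rewrite !inE => hl; lra.
  by exists j; rewrite !inE ?ltxx.
by rewrite e ltnn.
Qed.

Lemma tv_min a r : (1 < k)%N -> tv a r = tv (minn a (n.+1 - k)%N) r.
Proof.
move=> k0; rewrite /tv.
case: (leqP a (n.+1 - k)) => h; first by [].
try rewrite (minn_idPr (ltnW h)).
case: eqP => _.
  have e1 : 'C(n - a, k) = 0%N by apply: bin_small; lia.
  have e2 : 'C(n - (n.+1 - k), k) = 0%N by apply: bin_small; lia.
  by rewrite e1 e2.
case: (ltnP r (n.+1 - k)) => h2.
  by have -> : (r < a)%N by lia.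
case: (ltnP r a) => _ //; apply: bin_small; lia.
Qed.

End G.

Section F.
Variables (R : realType) (d k : nat).
Local Notation n := d.+1.
Implicit Types (x y w : 'rV[R]_n).

Lemma top_ex x : exists t : 'I_n, forall i, x ord0 i <= x ord0 t.
Proof.
case: (@arg_maxP _ R _ ord0 predT (fun i => x ord0 i) isT) => t _ H.
by exists t => i; apply: H.
Qed.

Lemma vtype_cover x (I : {set 'I_n}) : #|I| == k -> exists m, I \in vtype k x m.
Proof.
move=> hI.
case: (@arg_maxP _ R _ ord0 predT (fun i => gI I x i) isT) => t _ H.
exists t; rewrite in_vtype hI /=; apply/forallP => i; exact: H.
Qed.

Lemma vtype_uniq x (I : {set 'I_n}) m m' : SG x ->
  I \in vtype k x m -> I \in vtype k x m' -> m = m'.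
Proof.
move=> sg; rewrite !in_vtype => /andP[_ /forallP h1] /andP[_ /forallP h2].
apply/eqP; apply/negP => /negP mm.
have := h1 m'; have := h2 m => a1 a2.
have /andP[d1 d2] := sg _ _ mm; have /andP[d3 d4] := sg _ _ (mm : m != m') .
have /andP[d5 d6] : (x ord0 m' != x ord0 m) && (x ord0 m' - x ord0 m != 1).
  by apply: sg; rewrite eq_sym.
move: a1 a2; rewrite /gI.
case: (m \in I); case: (m' \in I) => /= a1 a2.
- have e : x ord0 m = x ord0 m' by lra.
  by rewrite e eqxx in d1.
- have e : x ord0 m - x ord0 m' = 1 by lra.
  by rewrite e eqxx in d2.
- have e : x ord0 m' - x ord0 m = 1 by lra.
  by rewrite e eqxx in d6.
- have e : x ord0 m = x ord0 m' by lra.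
  by rewrite e eqxx in d1.
Qed.

Definition w0 : 'rV[R]_n := \row_j (j%:R).

Lemma SG_evp x : evp (fun e : R => SG (x + e *: w0)).
Proof.
have := @evp_forall R _ (fun (p : 'I_n * 'I_n) e =>
  p.1 != p.2 -> ((x + e *: w0) ord0 p.1 != (x + e *: w0) ord0 p.2) &&
      ((x + e *: w0) ord0 p.1 - (x + e *: w0) ord0 p.2 != 1)).
case=> [[i j]|r [r0 H]]; last first.
  by exists r; split => // e e0 er i j ij; exact: (H e e0 er (i, j) ij).
have [->|ij] := eqVneq i j; first by apply: evp_T => e _; rewrite eqxx.
have q0 : (i%:R - j%:R : R) != 0.
  by rewrite subr_eq0 eqr_nat.
apply: evp_mono (evp_and (evp_neq (x ord0 i - x ord0 j) 0 q0)
                          (evp_neq (x ord0 i - x ord0 j) 1 q0)).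
move=> e [h1 h2] _ /=; rewrite !mxE.
have -> : x ord0 i + e * i%:R - (x ord0 j + e * j%:R) =
          x ord0 i - x ord0 j + e * (i%:R - j%:R) by ring.
rewrite h2 andbT; apply/negP => /eqP h; move: h1.
have -> : x ord0 i - x ord0 j + e * (i%:R - j%:R) = 0.
  have -> : x ord0 i - x ord0 j + e * (i%:R - j%:R) =
     (x ord0 i + e * i%:R) - (x ord0 j + e * j%:R) by ring.
  by rewrite h subrr.
by rewrite eqxx.
Qed.
End F.

Lemma card_lt_ord (n b : nat) : (b <= n)%N -> #|[set i : 'I_n | (i < b)%N]%SET| = b.
Proof.
move=> hb.
have inj : injective (fun j : 'I_b => widen_ord hb j).
  by move=> i j /(congr1 val) /= /val_inj.
rewrite -[RHS]card_ord -(card_imset _ inj); apply: eq_card => i.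
rewrite inE; apply/idP/imsetP => [ib|[j _ ->]]; last by rewrite /= ltn_ord.
by exists (Ordinal ib) => //; apply: val_inj.
Qed.

Lemma card_perm_lt (n b : nat) (s : 'S_n) : (b <= n)%N ->
  #|[set j | (s j < b)%N]%SET| = b.
Proof.
move=> hb; rewrite -[RHS](card_lt_ord hb) -[RHS](card_preimset _ (@perm_inj _ s)).
by apply: eq_card => j; rewrite !inE.
Qed.

Section Con.
Variables (R : realType) (d k : nat).
Local Notation n := d.+1.
Variables (a : nat) (s : 'S_n) (a1 : (0 < a)%N).

Definition uu (r : nat) : R := r%:R / (n%:R + 1).
Definition ff (r : nat) : R := - uu r - (if (a <= r)%N then 3 else 0).

Lemma uu_ge0 r : 0 <= uu r.
Proof. by rewrite /uu divr_ge0 // ltW // ltr_pwDr. Qed.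
Lemma uu_lt1 r : (r < n)%N -> uu r < 1.
Proof.
move=> rn; rewrite /uu ltr_pdivrMr ?mul1r; last by rewrite ltr_pwDr.
rewrite -natr1; have : (r <= d)%N by [].
rewrite -(ler_nat R) => h; lra.
Qed.
Lemma uu_lt r r' : (r < r')%N -> uu r < uu r'.
Proof.
by move=> h; rewrite /uu ltr_pM2r ?ltr_nat // invr_gt0 ltr_pwDr.
Qed.

Lemma ff_lt r r' : (r < n)%N -> (r' < n)%N -> (ff r < ff r') = (r' < r)%N.
Proof.
move=> rn r'n; have := uu_ge0 r; have := uu_ge0 r'; have := uu_lt1 rn;
  have := uu_lt1 r'n => h1 h2 h3 h4.
rewrite /ff; have [h|h|h] := ltngtP r' r.
- have := uu_lt h => h5; case: ifP => /= H1; case: ifP => /= H2; try lra.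
  by try (move: H1 => /negbT H1); try (move: H2 => /negbT H2); lia.
- have := uu_lt h => h5; apply/negbTE; rewrite -leNgt.
  case: ifP => /= H1; case: ifP => /= H2; try lra.
  by try (move: H1 => /negbT H1); try (move: H2 => /negbT H2); lia.
- by subst r'; rewrite ltxx.
Qed.

Definition xx : 'rV[R]_n := \row_m ff (s m).

Lemma ff_le0 r : ff r <= 0.
Proof. rewrite /ff; have := uu_ge0 r; case: ifP => _; lra. Qed.

Lemma ff0 : ff 0 = 0.
Proof. by rewrite /ff /uu mul0r oppr0 ifN ?subr0 // -ltnNge. Qed.

Lemma xx_SG : SG xx.
Proof.
move=> i j ij; rewrite !mxE.
have sij : s i != s j by rewrite (inj_eq (@perm_inj _ s)).
have hi := ltn_ord (s i); have hj := ltn_ord (s j).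
have := uu_ge0 (s i); have := uu_ge0 (s j); have := uu_lt1 hi;
  have := uu_lt1 hj => h1 h2 h3 h4.
have [h|h] : uu (s i) < uu (s j) \/ uu (s j) < uu (s i).
  case: (ltngtP (s i) (s j)) => h; [left; exact: uu_lt|right; exact: uu_lt|].
  by move/val_inj: h => h; rewrite h eqxx in sij.
- rewrite /ff; apply/andP; split; apply/eqP => e;
  case: ifP e => _; case: ifP => _ e; lra.
- rewrite /ff; apply/andP; split; apply/eqP => e;
  case: ifP e => _; case: ifP => _ e; lra.
Qed.

Definition tt : 'I_n := ((s^-1)%g ord0).

Lemma xx_top i : xx ord0 i <= xx ord0 tt.
Proof. by rewrite !mxE /tt permKV ff0 ff_le0. Qed.

Lemma xx_U m : #|Uset xx m| = s m.
Proof.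
rewrite -(card_perm_lt s (ltnW (ltn_ord (s m)))); apply: eq_card => j.
by rewrite !inE !mxE ff_lt.
Qed.

Lemma xx_A : (a <= n)%N -> #|Aset xx| = a.
Proof.
move=> an; rewrite -(card_perm_lt s an); apply: eq_card => j; rewrite !inE.
apply/forallP/idP.
  move=> /(_ tt); rewrite !mxE /tt permKV ff0 /ff; have := uu_ge0 (s j).
  by case: ifP => h; [lra | move/negbT: h; rewrite -ltnNge].
move=> h i; rewrite !mxE.
have hj : (a <= s j)%N = false by rewrite leqNgt h.
have -> : ff (s j) = - uu (s j) by rewrite /ff hj subr0.
have := uu_lt1 (ltn_ord (s j)); have := ff_le0 (s i); lra.
Qed.
End Con.



Theorem mainTheorem4 (R : realType) (d k : nat) (hk2 : (2 <= k)%N) (hkd : (k < d.+1)%N)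
  (c : {ffun 'I_d.+1 -> nat}) :
  (exists C : set 'rV[R]_d.+1,
      is_maximal_cell k C /\
      exists T, C = closure (@cell R d.+1 k T) /\ @cell R d.+1 k T !=set0 /\ c = coarse T)
  <->
  (exists a : nat, [/\ (1 <= a)%N, (a <= d.+2 - k)%N &
      exists s : 'S_d.+1, c = [ffun i => tuple_alpha d.+1 k a (s i)]]).
Proof.
have k0 : (0 < k)%N by lia.
have clcl (A : set 'rV[R]_d.+1) : closure (closure A) = closure A.
  by apply/esym/closure_id; exact: closed_closure.
split.
- move=> [C [[_ maxC] [T [eC [[x0 hx0] ->]]]]].
  have hx0' : vtype k x0 = T := hx0.
  have [e [e0 [hv hs]]] := evp_ex (evp_and (vtype_perturb k x0 (w0 R d)) (SG_evp x0)).
  set y := x0 + e *: (w0 R d) in hv hs.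
  have hT' : vtype k y = Phi (vtype k x0) (w0 R d) := hv.
  rewrite hx0' in hT'.
  have sub : @cell R d.+1 k T `<=` closure (@cell R d.+1 k (vtype k y)).
    move=> x hx. apply: (@closure_evp R d.+1 _ x (w0 R d)).
    apply: evp_mono (vtype_perturb k x (w0 R d)) => e' h.
    have hx' : vtype k x = T := hx.
    rewrite /cell /= h hx' hT'; done.
  have eqC : C = closure (@cell R d.+1 k (vtype k y)).
    apply: maxC.
      by exists (vtype k y); split => //; exists y.
    rewrite eC => z /(closureS sub); by rewrite clcl.
  have yC : closure (@cell R d.+1 k T) y.
    by rewrite -eC eqC; apply: subset_closure.
  have TT : T = vtype k y.
    apply/ffunP => m; apply/setP => I; apply/idP/idP.
    + move=> hI; have := hI; rewrite -hx0' in_vtype => /andP[hk _].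
      rewrite /vtype ffunE inE; apply/andP; split; first by rewrite inE.
      apply: (closure_sector _ yC) => z hz.
      move: hI; rewrite -(hz : vtype k z = T) ffunE inE => /andP[].
      done.
    + by rewrite hT' ffunE inE => /andP[].
  rewrite TT.
  have [t ht] := top_ex y.
  pose rk m := Ordinal (Uset_lt y m).
  have rkinj : injective rk by move=> i j /(congr1 val) /= /(rank_inj hs).
  exists (minn #|Aset y| (d.+2 - k)); split.
  + rewrite leq_min; apply/andP; split; last by lia.
    apply/card_gt0P; exists t; rewrite inE; apply/forallP => i.
    have := ht i; lra.
  + exact: geq_minr.
  + exists (perm rkinj); apply/ffunP => m.
    have -> : coarse (vtype k y) m = #|vtype k y m| by rewrite ffunE.
    rewrite (card_vtype hs ht m k0) (tv_min _ _ _ hk2) ffunE permE /tuple_alpha ffunE /tv /=.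
    done.
- move=> [a [a1 ak [s ->]]].
  have an : (a <= d.+1)%N by lia.
  set x := xx R a s.
  have sg : SG x := @xx_SG R d a s.
  exists (closure (@cell R d.+1 k (vtype k x))); split.
  + split; first by exists (vtype k x); split => //; exists x.
    move=> C' [T'' [[z hz] ->]] sub.
    have hz' : vtype k z = T'' := hz.
    have xC : closure (@cell R d.+1 k T'') x by apply: sub; apply: subset_closure.
    have hsub m I : I \in T'' m -> I \in vtype k x m.
      move=> hI; have := hI; rewrite -hz' in_vtype => /andP[hk _].
      rewrite /vtype ffunE inE; apply/andP; split; first by rewrite inE.
      apply: (closure_sector _ xC) => z' hz2.
      move: hI; rewrite -(hz2 : vtype k z' = T'') ffunE inE => /andP[].
      done.
    suff -> : T'' = vtype k x by [].
    apply/ffunP => m; apply/setP => I; apply/idP/idP; first exact: hsub.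
    move=> hI; have := hI; rewrite in_vtype => /andP[hk _].
    have [m' hm'] := vtype_cover z hk.
    rewrite hz' in hm'.
    by rewrite -(vtype_uniq sg (hsub _ _ hm') hI).
  + exists (vtype k x); split => //; split; first by exists x.
    apply/ffunP => m.
    have -> : coarse (vtype k x) m = #|vtype k x m| by rewrite ffunE.
    rewrite (card_vtype sg (@xx_top R d a s a1) m k0) (@xx_A R d a s a1 an) (@xx_U R d a s a1) ffunE /tuple_alpha ffunE /tv.
    done.
Qed.
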